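(* Let $n$ and $k$ be positive integers with $n\ge3k$. Then $B_2(n,k,2k;3)\ge 2^{\lfloor (n-k)/k\rfloor}$.
   Context: For a prime power $q$, $\mathcal{G}_q(n,k)$ denotes the set of all $k$-dimensional subspaces of $\mathbb{F}_q^n$. An $\alpha$-$(n,k,\delta)_q^c$ covering Grassmannian code is a subset $\mathcal{C}\subseteq\mathcal{G}_q(n,k)$ (no repeated codewords) such that every set of $\alpha$ distinct codewords of $\mathcal{C}$ spans a subspace of $\mathbb{F}_q^n$ of dimension at least $k+\delta$. $B_q(n,k,\delta;\alpha)$ denotes the maximum size of an $\alpha$-$(n,k,\delta)_q^c$ code. *)

(* Defs.v *)
From HB Require Import structures.
From mathcomp Require Import all_boot all_algebra.
Set Implicit Arguments. Unset Strict Implicit. Unset Printing Implicit Defensive.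
Local Open Scope ring_scope.

Section FinSpace.
Variables (K : finFieldType) (vT : vectType K).
Definition fspace := {vspace vT}.
HB.instance Definition _ := SubChoice.on fspace.
HB.instance Definition _ := [Finite of fspace by <:].
End FinSpace.

(* The ambient space F^n is 'rV[F]_n; codes are sets of subspaces (no
   repetition). *)
Definition covering_code (F : finFieldType) (n k delta alpha : nat)
    (C : {set fspace 'rV[F]_n}) : bool :=
  [forall U in C, \dim (U : {vspace 'rV[F]_n}) == k] &&
  [forall S : {set fspace 'rV[F]_n},
     (S \subset C) && (#|S| == alpha) ==>
     (k + delta <= \dim (\sum_(U in S) (U : {vspace 'rV[F]_n}))%VS)%N].

Definition Bq (F : finFieldType) (n k delta alpha : nat) : nat :=
  \max_(C : {set fspace 'rV[F]_n} | covering_code k delta alpha C) #|C|.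

(* Main.v *)
Require Import Defs.
From mathcomp Require Import all_boot all_algebra.

Set Implicit Arguments. Unset Strict Implicit.
Import GRing.Theory.
Local Open Scope ring_scope.

Notation mulmxr1 := (@mulmxr _ 1 _ _).

Section Gen.
Variables (F : fieldType) (n k : nat).
Hypothesis kpos : (0 < k)%N.

Definition Mw (w : nat -> F) : 'M[F]_(k, n) :=
  \matrix_(r, j) if (r == (j %% k)%N :> nat) then w (j %/ k)%N else 0.

Lemma coordE w (x : 'rV_k) (j : 'I_n) :
  (x *m Mw w) 0 j = x 0 (Ordinal (ltn_pmod j kpos)) * w (j %/ k)%N.
Proof.
rewrite mxE (bigD1 (Ordinal (ltn_pmod j kpos))) //= !mxE eqxx big1 => [|r Hr].
  by rewrite addr0.
rewrite mxE ifF ?mulr0 //; apply: contraNF Hr => /eqP E.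
by apply/eqP/val_inj.
Qed.

Lemma coord_block w (x : 'rV_k) (q : nat) (r : 'I_k) (hj : (q * k + r < n)%N) :
  (x *m Mw w) 0 (Ordinal hj) = x 0 r * w q.
Proof.
rewrite coordE /=.
have E1 : ((q * k + r) %% k = r)%N by rewrite modnMDl modn_small.
have E2 : ((q * k + r) %/ k = q)%N by rewrite divnMDl // divn_small // addn0.
rewrite E2; congr (x 0 _ * _); exact/val_inj.
Qed.

Lemma key3 (m : nat) w1 w2 w3 (x1 x2 x3 : 'rV_k) :
  (m.+1 * k <= n)%N ->
  x1 *m Mw w1 + x2 *m Mw w2 + x3 *m Mw w3 = 0 ->
  forall (q : nat) (r : 'I_k), (q <= m)%N ->
    x1 0 r * w1 q + x2 0 r * w2 q + x3 0 r * w3 q = 0.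
Proof.
move=> Hn E q r Hq.
have hj : (q * k + r < n)%N.
  apply: leq_trans (_ : q.+1 * k <= n)%N.
    by rewrite mulSnr ltn_add2l.
  by apply: leq_trans Hn; rewrite leq_mul2r ltnS Hq orbT.
have := congr1 (fun A : 'rV_n => A 0 (Ordinal hj)) E.
rewrite /= mxE [X in X + _ = _]mxE !coord_block.
by rewrite mxE.
Qed.

Lemma dim_inj p (M : 'M[F]_(p, n)) :
  (forall x : 'rV_p, x *m M = 0 -> x = 0) ->
  \dim (limg (linfun (mulmxr1 M))) = p.
Proof.
move=> H.
have inj : injective (linfun (mulmxr1 M)).
  move=> x y; rewrite !lfunE /= => Exy.
  apply/eqP; rewrite -subr_eq0; apply/eqP/H.
  by rewrite mulmxBl Exy subrr.
have := limg_ker_dim (linfun (mulmxr1 M)) fullv.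
rewrite (eqP (introT lker0P inj)) capv0 dimv0 add0n dimvf => ->.
by rewrite dim_matrix mul1r.
Qed.

End Gen.

Lemma F2cases (a : 'F_2) : a = 0 \/ a = 1.
Proof. have H := ltn_ord a.
have: (nat_of_ord a == 0)%N || (nat_of_ord a == 1)%N.
  by move: H; case: (nat_of_ord a) => [|[|]].
by case/orP => /eqP E; [left|right]; apply/val_inj; rewrite /= E.
Qed.

Lemma F2_add0 (x y : 'F_2) : x + y = 0 -> x = y.
Proof.
by case: (F2cases x) => ->; case: (F2cases y) => -> //;
  rewrite ?add0r ?addr0 => /eqP; rewrite oner_eq0.
Qed.

Section Code.
Variables (n k m : nat).
Hypothesis kpos : (0 < k)%N.
Hypothesis Hn : (m.+1 * k <= n)%N.
Local Notation F := 'F_2.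

Definition wt (b : 'rV[F]_m) (q : nat) : F :=
  if q is q'.+1 then
    (match insub q' : option 'I_m with Some i => b 0 i | None => 0 end)
  else 1.

Lemma wtS b (i : 'I_m) : wt b i.+1 = b 0 i.
Proof. by rewrite /= valK. Qed.

Definition Mb b : 'M[F]_(k, n) := @Mw _ n k (wt b).
Definition Ub b : {vspace 'rV[F]_n} := limg (linfun (mulmxr1 (Mb b))).

Lemma dimUb b : \dim (Ub b) = k.
Proof.
apply: dim_inj => x Hx.
have H0 : x *m Mb b + 0 *m Mb b + 0 *m Mb b = 0 by rewrite !mul0mx !addr0.
apply/rowP => r; have := key3 kpos Hn H0 r (leq0n m).
by rewrite /= !mxE !mul0r !addr0 mulr1.
Qed.

Lemma Ub_inj : injective Ub.
Proof.
move=> b c E.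
pose x1 : 'rV[F]_k := const_mx 1.
have : x1 *m Mb b \in Ub c.
  rewrite -E; have := memv_img (linfun (mulmxr1 (Mb b))) (memvf x1).
  by rewrite lfunE.
case/memv_imgP => y _; rewrite lfunE /= => Ey.
have H0 : x1 *m Mb b + (- y) *m Mb c + 0 *m Mb b = 0.
  by rewrite Ey mulNmx subrr mul0mx addr0.
pose r0 : 'I_k := Ordinal kpos.
have h0 := key3 kpos Hn H0 r0 (leq0n m).
rewrite /= !mxE !mulr1 addr0 in h0.
apply/rowP => i.
have hi := key3 kpos Hn H0 r0 (ltn_ord i).
rewrite !wtS !mxE mul1r mul0r addr0 in hi.
have e : - y 0 r0 = -1 by apply/eqP; rewrite -addr_eq0 addrC h0.
rewrite e mulN1r in hi.
by move/eqP: hi; rewrite subr_eq0 => /eqP.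
Qed.

Lemma indep3 (b1 b2 b3 : 'rV[F]_m) (a1 a2 a3 : F) :
  b1 != b2 -> b2 != b3 -> b3 != b1 ->
  (forall q, (q <= m)%N -> a1 * wt b1 q + a2 * wt b2 q + a3 * wt b3 q = 0) ->
  [/\ a1 = 0, a2 = 0 & a3 = 0].
Proof.
move=> h12 h23 h31 H.
have h0 := H 0%N (leq0n m); rewrite /= !mulr1 in h0.
have diff : forall c d : 'rV[F]_m, c != d -> exists i, c 0 i != d 0 i.
  move=> c d cd; apply/existsP; apply: contraR cd => /existsPn Hn'.
  by apply/eqP/rowP => i; apply/eqP/negPn/Hn'.
have Hi := fun i : 'I_m => H i.+1 (ltn_ord i).
have pair : forall c d : 'rV[F]_m, c != d -> (forall i, c 0 i + d 0 i = 0) -> False.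
  move=> c d /diff [i ci] Hcd; move/negP: ci; apply; apply/eqP/F2_add0/Hcd.
case: (F2cases a1) h0 Hi => ->; case: (F2cases a2) => ->;
  case: (F2cases a3) => -> //= h0 Hi; try (by move/(congr1 val): h0).
- exfalso; apply: (pair _ _ h23) => i; have := Hi i.
  by rewrite !valK !mul0r !mul1r add0r.
- exfalso; apply: (pair _ _ h31) => i; have := Hi i.
  by rewrite !valK !mul0r !mul1r addr0 addrC.
- exfalso; apply: (pair _ _ h12) => i; have := Hi i.
  by rewrite !valK !mul0r !mul1r addr0.
Qed.

Lemma dim3 (b1 b2 b3 : 'rV[F]_m) :
  b1 != b2 -> b2 != b3 -> b3 != b1 ->
  (k + 2 * k <= \dim (Ub b1 + Ub b2 + Ub b3))%N.
Proof.
move=> h12 h23 h31.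
pose M : 'M[F]_(k + k + k, n) := col_mx (col_mx (Mb b1) (Mb b2)) (Mb b3).
have dec : forall x : 'rV_(k + k + k), x *m M =
    lsubmx (lsubmx x) *m Mb b1 + rsubmx (lsubmx x) *m Mb b2 + rsubmx x *m Mb b3.
  move=> x; rewrite -{1}(hsubmxK x) -{1}(hsubmxK (lsubmx x)).
  by rewrite mul_row_col mul_row_col.
have Hd : \dim (limg (linfun (mulmxr1 M))) = (k + k + k)%N.
  apply: dim_inj => x Hx.
  rewrite dec in Hx.
  have K := key3 kpos Hn Hx.
  have Z : forall r, [/\ lsubmx (lsubmx x) 0 r = 0, rsubmx (lsubmx x) 0 r = 0
       & rsubmx x 0 r = 0].
    by move=> r; apply: indep3 h12 h23 h31 _ => q hq; apply: K.
  rewrite -(hsubmxK x) -(hsubmxK (lsubmx x)).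
  have -> : lsubmx (lsubmx x) = 0 by apply/rowP => i; case: (Z i) => e _ _; rewrite e mxE.
  have -> : rsubmx (lsubmx x) = 0 by apply/rowP => i; case: (Z i) => _ e _; rewrite e mxE.
  have -> : rsubmx x = 0 by apply/rowP => i; case: (Z i) => _ _ e; rewrite e mxE.
  by rewrite !row_mx0.
have -> : (k + 2 * k = k + k + k)%N by rewrite mul2n -addnn addnA.
rewrite -Hd; apply: dimvS; apply/subvP => v /memv_imgP [x _ ->].
rewrite lfunE /= dec.
have mem : forall b (y : 'rV_k), y *m Mb b \in Ub b.
  by move=> b y; have := memv_img (linfun (mulmxr1 (Mb b))) (memvf y); rewrite lfunE.
by rewrite !memv_add.
Qed.

Definition Ccode : {set fspace 'rV[F]_n} :=
  [set (Ub b : fspace 'rV[F]_n) | b : 'rV[F]_m].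

Lemma Ccode_card : #|Ccode| = (2 ^ m)%N.
Proof.
rewrite /Ccode card_imset; last exact: Ub_inj.
by rewrite card_mx card_Fp // mul1n.
Qed.

Lemma Ccode_cov : covering_code k (2 * k) 3 Ccode.
Proof.
apply/andP; split.
  by apply/forall_inP => U /imsetP [b _ ->]; rewrite dimUb.
apply/forallP => S; apply/implyP => /andP [sSC /eqP cS].
have : (2 < #|S|)%N by rewrite cS.
case/card_gt2P => [x [y [z [[xS yS zS] [xy yz zx]]]]].
case/imsetP: (subsetP sSC x xS) => b1 _ Ex.
case/imsetP: (subsetP sSC y yS) => b2 _ Ey.
case/imsetP: (subsetP sSC z zS) => b3 _ Ez.
subst x y z.
have d12 : b1 != b2 by apply: contraNneq xy => ->.
have d23 : b2 != b3 by apply: contraNneq yz => ->.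
have d31 : b3 != b1 by apply: contraNneq zx => ->.
apply: leq_trans (dim3 d12 d23 d31) _; apply: dimvS.
rewrite !subv_add; apply/andP; split; [apply/andP; split|];
  [apply: (@sumv_sup _ _ _ (Ub b1 : fspace _)) | apply: (@sumv_sup _ _ _ (Ub b2 : fspace _)) | apply: (@sumv_sup _ _ _ (Ub b3 : fspace _))]; by rewrite ?subvv.
Qed.

End Code.

Theorem mainTheorem12 (n k : nat) :
  (0 < k)%N -> (3 * k <= n)%N ->
  (2 ^ ((n - k) %/ k) <= Bq 'F_2 n k (2 * k) 3)%N.
Proof.
move=> kpos H3.
set m := ((n - k) %/ k)%N.
have Hn : (m.+1 * k <= n)%N.
  rewrite mulSn -(subnKC (_ : k <= n)%N); last first.
    by apply: leq_trans H3; rewrite leq_pmull.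
  by rewrite leq_add2l leq_divM.
rewrite -(@Ccode_card n k m kpos Hn).
have := @leq_bigmax_cond _ _ (fun C : {set fspace 'rV['F_2]_n} => #|C|) _ (Ccode_cov kpos Hn).
exact.
Qed.
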